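(* Let $n\in\mathbb N$ and $0<\alpha<\beta$. Then there exists $c=c(n,\alpha,\beta)>0$ such that $|P_{n,j,m}(\lambda)|\le c\beta^m$ whenever $m\in\mathbb Z_+$, $1\le j\le n$ and $\lambda\in\mathbb C^n$ satisfies $\max_{1\le r\le n}|\lambda_r|\le\alpha$.
   Context: For $\lambda=(\lambda_1,\dots,\lambda_n)\in\mathbb C^n$, $M_n(\lambda)$ is the Vandermonde matrix $(\lambda_j^{r-1})_{j,r=1}^n$. For $1\le j\le n$ and $m\in\mathbb Z_+$, $M_{n,j,m}(\lambda)$ is the matrix obtained from $M_n(\lambda)$ by replacing its $j$-th column $(\lambda_1^{j-1},\dots,\lambda_n^{j-1})^T$ by $(\lambda_1^m,\dots,\lambda_n^m)^T$. The polynomial $\det M_n(\lambda)=\prod_{1\le j<r\le n}(\lambda_r-\lambda_j)$ divides $\det M_{n,j,m}(\lambda)$ in $\mathbb C[\lambda_1,\dots,\lambda_n]$, and $P_{n,j,m}\in\mathbb C[\lambda_1,\dots,\lambda_n]$ denotes the quotient $\det M_{n,j,m}(\lambda)/\det M_n(\lambda)$. $\mathbb Z_+=\{0,1,2,\dots\}$. *)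

(* Defs.v *)
From HB Require Import structures.
From mathcomp Require Import all_boot all_order all_algebra.
From mathcomp Require Import reals complex mpoly.
From Stdlib Require Import ClassicalEpsilon.

Set Implicit Arguments. Unset Strict Implicit. Unset Printing Implicit Defensive.
Import Order.TTheory GRing.Theory Num.Theory.
Local Open Scope ring_scope.

Section Vdm.
Variable (R : realType) (n : nat).
Local Notation C := (R[i]).

(* Vandermonde matrix M_n(lambda) = (lambda_k^r)_{k,r}, rows indexed by the
   variable k, columns by the exponent r (0-indexed: column r <-> paper r+1). *)
Definition vdm : 'M[{mpoly C[n]}]_n := \matrix_(k < n, r < n) ('X_k ^+ r).

(* M_{n,j,m}: column j (0-indexed, i.e. paper column j+1, entries lambda^j)
   replaced by (lambda_k^m)_k. *)
Definition vdm_rep (j : 'I_n) (m : nat) : 'M[{mpoly C[n]}]_n :=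
  \matrix_(k < n, r < n) ('X_k ^+ (if r == j then m else r)).

(* P_{n,j,m}: the quotient det M_{n,j,m} / det M_n in C[lambda_1..lambda_n],
   i.e. the (unique) polynomial q with det M_{n,j,m} = det M_n * q. *)
Definition Pnjm (j : 'I_n) (m : nat) : {mpoly C[n]} :=
  epsilon (inhabits 0) (fun q => \det (vdm_rep j m) = \det vdm * q).
End Vdm.

(* Main.v *)
Require Import Defs.
From HB Require Import structures.
From mathcomp Require Import all_boot all_order all_algebra.
From mathcomp Require Import reals complex mpoly.
From mathcomp Require Import ring.
Set Implicit Arguments. Unset Strict Implicit. Unset Printing Implicit Defensive.
Import Order.TTheory GRing.Theory Num.Theory.
Local Open Scope ring_scope.
Local Open Scope ring_scope.

Section Rem.
Variable F : fieldType.

Definition Qs (s : seq F) : {poly F} := \prod_(x <- s) ('X - x%:P).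
Lemma Qs_monic s : Qs s \is monic. Proof. exact: monic_prod_XsubC. Qed.
Lemma size_Qs s : size (Qs s) = (size s).+1. Proof. exact: size_prod_XsubC. Qed.
Lemma Qs_top s : (Qs s)`_(size s) = 1.
Proof. by have := Qs_monic s; rewrite monicE lead_coefE size_Qs => /eqP. Qed.
Lemma Qs_cons x s : Qs (x :: s) = ('X - x%:P) * Qs s.
Proof. by rewrite /Qs big_cons. Qed.

Definition Rm s m := 'X^m %% Qs s.

Lemma size_Rm s m : (size (Rm s m) <= size s)%N.
Proof.
have := ltn_modpN0 ('X^m) (monic_neq0 (Qs_monic s)).
by rewrite size_Qs.
Qed.

Lemma Rm_top s m : (Rm s m)`_(size s) = 0.
Proof. by rewrite nth_default // size_Rm. Qed.

Lemma size_top0 (w : {poly F}) k : (size w <= k.+1)%N -> w`_k = 0 -> (size w <= k)%N.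
Proof.
rewrite leq_eqVlt => /orP [/eqP sw|//] wk.
have : lead_coef w = 0 by rewrite lead_coefE sw.
move/eqP; rewrite lead_coef_eq0 => /eqP w0.
by rewrite w0 size_poly0 in sw.
Qed.

Lemma onestep (d u : {poly F}) k : d \is monic -> size d = k.+1 ->
  (size u <= k.+1)%N -> u %% d = u - (u`_k)%:P * d.
Proof.
move=> md sd su.
apply/esym/(@modpP _ _ ((u`_k)%:P)); first by rewrite addrC subrK.
rewrite sd ltnS; apply: size_top0.
  apply: leq_trans (size_polyD _ _) _; rewrite geq_max su size_polyN.
  by rewrite mul_polyC (leq_trans (size_scale_leq _ _)) ?sd.
have dk : d`_k = 1 by move: md; rewrite monicE lead_coefE sd => /eqP.
by rewrite coefB coefCM dk mulr1 subrr.
Qed.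

Variables (mu : F) (s : seq F).
Local Notation k := (size s).
Local Notation Q := (Qs s).
Local Notation P := (Qs (mu :: s)).
Definition Tm m := (Rm (mu :: s) m)`_k.

Lemma RmS t m : Rm t m.+1 = ('X * Rm t m) %% Qs t.
Proof. by rewrite /Rm modp_mul exprS. Qed.

Lemma decomp0 : Rm (mu :: s) 0 = Rm s 0 + (Tm 0)%:P * Q.
Proof.
have s1 : (size (1%R : {poly F}) <= k.+1)%N by rewrite size_poly1.
rewrite /Tm /Rm expr0 modp_small; last by rewrite size_poly1 size_Qs.
by rewrite (onestep (Qs_monic s) (size_Qs s) s1) subrK.
Qed.

Lemma decompS m : Rm (mu :: s) m = Rm s m + (Tm m)%:P * Q ->
  Rm (mu :: s) m.+1 = Rm s m.+1 + (('X * Rm s m)`_k + mu * Tm m)%:P * Q.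
Proof.
move=> H.
have sX : (size ('X * Rm s m)%R <= k.+1)%N.
  rewrite mulrC; apply: leq_trans (size_polyMleq _ _) _.
  by rewrite size_polyX addn2 /= ltnS size_Rm.
rewrite RmS H (RmS s) (onestep (Qs_monic s) (size_Qs s) sX).
have -> : 'X * (Rm s m + (Tm m)%:P * Q) =
   ('X * Rm s m + (Tm m * mu)%:P * Q) + (Tm m)%:P * P.
  rewrite Qs_cons polyCM; ring.
rewrite modpD modp_mull addr0 modp_small; last first.
  rewrite size_Qs /= ltnS; apply: leq_trans (size_polyD _ _) _.
  rewrite geq_max sX /= mul_polyC (leq_trans (size_scale_leq _ _)) //.
  by rewrite size_Qs.
rewrite polyCD polyCM; ring.
Qed.

Lemma decomp m : Rm (mu :: s) m = Rm s m + (Tm m)%:P * Q.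
Proof.
elim: m => [|m IH]; first exact: decomp0.
have H := decompS IH.
suff -> : Tm m.+1 = ('X * Rm s m)`_k + mu * Tm m by [].
by rewrite /Tm H coefD coefCM Qs_top Rm_top add0r mulr1.
Qed.

Lemma Tm_rec m : Tm m.+1 = ('X * Rm s m)`_k + mu * Tm m.
Proof.
by rewrite /Tm (decompS (decomp m)) coefD coefCM Qs_top Rm_top add0r mulr1.
Qed.

Lemma Tm0 : Tm 0 = (1 : {poly F})`_k.
Proof. by rewrite /Tm /Rm expr0 modp_small // size_poly1 size_Qs. Qed.
End Rem.
Section Bnd.
Variable F : numFieldType.
Definition bnd (p : {poly F}) K := forall i, `|p`_i| <= K.

Lemma Qs_bnd a s : 0 <= a -> (forall x, x \in s -> `|x| <= a) ->
  bnd (Qs s) ((1 + a) ^+ size s).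
Proof.
move=> a0; elim: s => [|x s IH] Hs i.
  rewrite /Qs big_nil expr0 coefC; case: ifP => _; by rewrite ?normr1 ?normr0.
have B0 : 0 <= (1 + a) ^+ size s by rewrite exprn_ge0 // addr_ge0.
rewrite Qs_cons mulrBl coefB coefXM coefCM /= exprS mulrDl mul1r.
have IH' : bnd (Qs s) ((1 + a) ^+ size s) by apply: IH => y ys; apply: Hs; rewrite inE ys orbT.
apply: le_trans (ler_normB _ _) _; apply: lerD.
  by case: ifP => _; rewrite ?normr0 // IH'.
rewrite normrM; apply: ler_pM => //; try exact: (IH' i).
by apply: Hs; rewrite inE eqxx.
Qed.

Lemma Rm_bnd a b k : 0 <= a -> a < b -> exists K, 0 <= K /\
  forall s, size s = k -> (forall x, x \in s -> `|x| <= a) ->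
  forall m, bnd (Rm s m) (K * b ^+ m).
Proof.
move=> a0 ab.
have b0 : 0 <= b by apply: le_trans a0 (ltW ab).
have bm0 m : 0 <= b ^+ m by rewrite exprn_ge0.
have ba0 : 0 < b - a by rewrite subr_gt0.
elim: k => [|k [K0 [K00 IH]]].
  exists 0; split => // -[|//] _ _ m i.
  by rewrite /Rm /Qs big_nil modp1 coef0 normr0 mul0r.
pose K1 := K0 / (b - a) + 1.
have K10 : 1 <= K1 by rewrite lerDr divr_ge0 // ltW.
have K1p : 0 <= K1 by apply: le_trans K10.
exists (K0 + K1 * (1 + a) ^+ k); split.
  by rewrite addr_ge0 // mulr_ge0 // exprn_ge0 // addr_ge0.
case=> [//|mu s] [sk] Hs m.
have Hs' : forall x, x \in s -> `|x| <= a by move=> x xs; apply: Hs; by rewrite inE xs orbT.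
have HT : forall m, `|Tm mu s m| <= K1 * b ^+ m.
  elim=> [|m' IHm].
    rewrite Tm0 coef1 expr0 mulr1; case: (_ == _); by rewrite ?normr1 ?normr0.
  rewrite Tm_rec; apply: le_trans (ler_normD _ _) _.
  have h1 : `|('X * Rm s m')`_(size s)| <= K0 * b ^+ m'.
    rewrite coefXM; case: ifP => _; last exact: (IH s sk Hs' m' _).
    by rewrite normr0 mulr_ge0.
  have h2 : `|mu * Tm mu s m'| <= a * (K1 * b ^+ m').
    rewrite normrM; apply: ler_pM => //; by apply: Hs; rewrite inE eqxx.
  apply: le_trans (lerD h1 h2) _.
  rewrite mulrA -mulrDl exprS mulrA; apply: ler_wpM2r => //.
  have e : (b - a) * K1 = K0 + (b - a).
    by rewrite /K1 mulrDr mulr1 mulrC divfK // gt_eqF.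
  have : K0 <= (b - a) * K1 by rewrite e lerDl ltW.
  move=> h; apply: le_trans (lerD h (lexx (a * K1))) _.
  by rewrite -mulrDl subrK mulrC.
move=> i; rewrite decomp coefD coefCM.
apply: le_trans (ler_normD _ _) _; rewrite mulrDl; apply: lerD.
  exact: (IH s sk Hs' m i).
rewrite normrM -mulrA [_ ^+ k * _]mulrC mulrA; apply: ler_pM => //.
rewrite -sk; exact: (Qs_bnd a0 Hs' i).
Qed.
End Bnd.
Lemma szI n : size (index_enum 'I_n) = n.
Proof. by rewrite /index_enum unlock -enumT size_enum_ord. Qed.

Section Gen.
Variables (T : comNzRingType) (n : nat) (x : 'I_n -> T).

Definition GG : {poly T} := \prod_(k < n) ('X - (x k)%:P).
Lemma GGmon : GG \is monic. Proof. exact: monic_prod_XsubC. Qed.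
Lemma sizeGG : size GG = n.+1. Proof. by rewrite size_prod_XsubC szI. Qed.
Definition AA m := Pdiv.CommonRing.rmodp ('X^m) GG.
Lemma sizeAA m : (size (AA m) <= n)%N.
Proof. by have := Pdiv.CommonRing.ltn_rmodpN0 ('X^m) (monic_neq0 GGmon); rewrite sizeGG. Qed.
Lemma GGk k : GG.[x k] = 0.
Proof. by rewrite horner_prod (bigD1 k) //= hornerXsubC subrr mul0r. Qed.
Lemma Xkm k m : x k ^+ m = \sum_(r < n) (AA m)`_r * x k ^+ r.
Proof.
have e := congr1 (horner^~ (x k)) (Pdiv.RingMonic.rdivp_eq GGmon ('X^m)).
move: e => /=; rewrite hornerXn hornerD hornerM GGk mulr0 add0r => ->.
exact: horner_coef_wide (sizeAA m).
Qed.

Definition VV : 'M[T]_n := \matrix_(k < n, r < n) (x k ^+ r).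
Definition VR (j : 'I_n) (m : nat) : 'M[T]_n :=
  \matrix_(k < n, r < n) (x k ^+ (if r == j then m else r)).
Definition Bm (j : 'I_n) m : 'M[T]_n :=
  \matrix_(s, r) (if r == j then (AA m)`_s else (1%:M : 'M[T]_n) s r).

Lemma VR_eq j m : VR j m = VV *m Bm j m.
Proof.
apply/matrixP => k r; rewrite !mxE.
under eq_bigr => s _ do rewrite !mxE.
have [e|ne] := eqVneq r j.
  subst r; rewrite ?eqxx /= Xkm; apply: eq_bigr => s _; by rewrite ?eqxx mulrC.
rewrite ?(negbTE ne) (bigD1 r) //= big1 => [|s sr]; first by rewrite eqxx mulr1 addr0.
by rewrite (negbTE sr) mulr0.
Qed.

Lemma detB j m : \det (Bm j m) = (AA m)`_j.
Proof.
rewrite (expand_det_row _ j) (bigD1 j) //= big1 ?addr0 => [|r rj]; last first.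
  by rewrite !mxE (negbTE rj) eq_sym (negbTE rj) mulr0n mul0r.
rewrite /cofactor.
have -> : row' j (col' j (Bm j m)) = 1%:M.
  apply/matrixP => a b.
  have nl : (lift j b == j) = false by rewrite eq_sym (negbTE (neq_lift _ _)).
  rewrite !mxE nl (inj_eq (@lift_inj _ j)).
  by [].
by rewrite mxE eqxx det1 -signr_odd addnn odd_double expr0 mul1r mulr1.
Qed.

Lemma detVR j m : \det (VR j m) = \det VV * (AA m)`_j.
Proof. by rewrite VR_eq det_mulmx detB. Qed.

Lemma detVV0 (F : numDomainType) (f : {rmorphism T -> F}) :
  (forall k, f (x k) = (k : nat)%:R) -> \det VV != 0.
Proof.
move=> fx; apply/negP => /eqP h; move: (congr1 f h).
rewrite rmorph0 -det_map_mx.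
have -> : map_mx f VV = (Vandermonde n (\row_k ((k : nat)%:R : F)))^T.
  by apply/matrixP => a b; rewrite !mxE rmorphXn /= fx.
rewrite det_tr det_Vandermonde => /eqP; apply/negP.
apply/prodf_neq0 => i _; apply/prodf_neq0 => l il; rewrite !mxE subr_eq0 eqr_nat.
by rewrite gtn_eqF.
Qed.

Lemma evalAA (F : fieldType) (f : {rmorphism T -> F}) m j :
  f ((AA m)`_j) = ('X^m %% Qs (map (f \o x) (index_enum 'I_n)))`_j.
Proof.
rewrite -(coef_map f); congr (_ `_ j).
have e := congr1 (map_poly f) (Pdiv.RingMonic.rdivp_eq GGmon ('X^m)).
rewrite rmorphD rmorphM /= map_polyXn in e.
have eG : map_poly f GG = Qs (map (f \o x) (index_enum 'I_n)).
  rewrite /GG rmorph_prod /Qs big_map; apply: eq_bigr => k _.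
  exact: map_polyXsubC.
rewrite eG in e; have h := modpP e; rewrite /AA h //.
rewrite size_Qs size_map szI ltnS map_polyE.
apply: leq_trans (size_Poly _) _; rewrite size_map; exact: sizeAA.
Qed.
End Gen.
From Stdlib Require Import ClassicalEpsilon.

Lemma Pnjm_eq (R : realType) (n : nat) (j : 'I_n) (m : nat) :
  Pnjm R j m = (AA (fun k : 'I_n => ('X_k : {mpoly R[i][n]})) m)`_j.
Proof.
pose A := (AA (fun k : 'I_n => ('X_k : {mpoly R[i][n]})) m)`_j.
have H0 := detVR (fun k : 'I_n => ('X_k : {mpoly R[i][n]})) j m.
pose v : 'I_n -> R[i] := fun k => (k : nat)%:R.
have nz := @detVV0 _ n (fun k : 'I_n => ('X_k : {mpoly R[i][n]})) _ (meval v)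
   (fun k => mevalXU v k).
change (\det (vdm_rep R j m) = \det (vdm R n) * A) in H0.
change (is_true (\det (vdm R n) != 0)) in nz.
have := epsilon_spec (inhabits (0 : {mpoly R[i][n]}))
  (fun q => \det (vdm_rep R j m) = \det (vdm R n) * q)
  (ex_intro _ A H0).
rewrite /Pnjm H0 => h; apply: (mulfI nz); by rewrite -h.
Qed.

Theorem lemma4p3 (R : realType) (n : nat) (alpha beta : R) :
  0 < alpha -> alpha < beta ->
  exists c : R, 0 < c /\
    forall (m : nat) (j : 'I_n) (lam : 'I_n -> R[i]),
      (forall r : 'I_n, `|lam r| <= (alpha%:C)%C) ->
      `|(Pnjm R j m).@[lam]| <= ((c * beta ^+ m)%:C)%C.
Proof.
move=> a0 ab.
have a0C : 0 <= (alpha%:C)%C :> R[i] by rewrite ler0c ltW.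
have abC : (alpha%:C)%C < (beta%:C)%C :> R[i] by rewrite ltcR.
have [K [K0 HK]] := Rm_bnd n a0C abC.
have /complex_realP [k KE] := ger0_real K0.
have ReK : 0 <= k by rewrite -ler0c -KE.
exists (k + 1); split; first by apply: lt_le_trans (@ltr01 R) _; rewrite lerDr.
move=> m j lam Hl.
rewrite Pnjm_eq (@evalAA _ n (fun k : 'I_n => ('X_k : {mpoly R[i][n]})) _ (meval lam) m j).
apply: le_trans (HK _ _ _ m j) _.
- by rewrite size_map szI.
- by move=> y /mapP [k0 _ ->] /=; rewrite mevalXU; exact: Hl.
rewrite rmorphM rmorphD rmorph1 rmorphXn /=.
apply: ler_wpM2r; first by rewrite exprn_ge0 // ler0c ltW // (lt_trans a0 ab).
by rewrite {1}KE lerDl ler01.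
Qed.
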